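(* For every integer $d\ge1$ and every integer $0\le i\le d$, $$a\Big(\tbinom{d+2}{2}-1,\,d+1,\,i\Big)\ \ge\ a\Big(\tbinom{d+2}{2},\,d+1,\,i\Big).$$
   Context: $a(n,k,l)$ denotes the number of integer vectors $(a_1,\dots,a_l)$ with $a_1+\dots+a_l=n$ and $1\le a_j\le k$ for all $j$. *)

(* Defs.v *)
From mathcomp Require Import all_boot.
Set Implicit Arguments. Unset Strict Implicit. Unset Printing Implicit Defensive.

(* Vectors are encoded as finite functions
   'I_l -> 'I_k.+1 (values in {0..k}); the constraint 1 <= a_j is explicit. *)
Definition a (n k l : nat) : nat :=
  #|[set f : {ffun 'I_l -> 'I_k.+1} |
      [forall j, 0 < (f j : nat)] && (\sum_(j < l) (f j : nat) == n)]|.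

(* Main.v *)
Require Import Defs.
From mathcomp Require Import all_boot.
From mathcomp Require Import all_algebra zify.
Import GRing.Theory.

Definition P k : {poly nat} :=
  (\sum_(v < k.+1) (if (0 < (v:nat))%N then 'X^v else 0))%R.

Lemma aP n k l : a n k l = ((P k ^+ l)`_n)%R.
Proof.
rewrite /a -sum1_card.
have -> : (P k ^+ l = \prod_(j < l) P k)%R by rewrite prodr_const card_ord.
rewrite /P bigA_distr_bigA coef_sum big_mkcond /=.
apply: eq_bigr => f _; rewrite inE.
case: (boolP [forall j, 0 < (f j : nat)]) => H /=.
- rewrite (eq_bigr (fun j => 'X^(f j))%R); last by move=> j _; rewrite (forallP H).
  rewrite prodrXr coefXn eq_sym; by case: eqP.
- move/forallPn: H => [j]; rewrite -leqNgt leqn0 => /eqP Hj.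
  by rewrite (bigD1 j) //= Hj /= mul0r coef0.
Qed.

Fixpoint A (k i : nat) (m : int) : nat :=
  match i with
  | 0 => (m == 0%R) : nat
  | i'.+1 => \sum_(v < k) A k i' (m - (v.+1)%:Z)%R
  end.

Lemma A_neg k i (m : int) : (m < 0)%R -> A k i m = 0.
Proof.
elim: i m => [|i IH] m Hm /=; first by case: eqP => // E; rewrite E in Hm.
by rewrite big1 // => v _; apply: IH; lia.
Qed.


Lemma A_link k i (m : nat) : ((P k ^+ i)`_m)%R = A k i m.
Proof.
elim: i m => [|i IH] m /=.
  by rewrite expr0 coefC; case: m.
rewrite exprS /P mulr_suml coef_sum big_ord_recl /= mul0r coef0 add0r.
apply: eq_bigr => v _; rewrite /= /bump /= add1n coefXnM.
case: ltnP => Hv.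
  by rewrite A_neg //; lia.
rewrite IH; congr (A _ _ _); lia.

Qed.

Lemma A_sym k i (m : int) : A k i m = A k i ((i * k.+1)%:Z - m)%R.
Proof.
elim: i m => [|i IH] m /=.
  by rewrite mul0n sub0r oppr_eq0.
rewrite (reindex_inj rev_ord_inj) /=.
apply: eq_bigr => v _; rewrite IH; congr (A _ _ _).
have := ltn_ord v.
lia.
Qed.

Lemma A_iter k i (x : int) :
  (forall m, ((i * k.+1)%:Z <= 2 * m)%R -> A k i (m + 1)%R <= A k i m) ->
  ((i * k.+1)%:Z <= 2 * x)%R -> forall y, (x <= y)%R -> A k i y <= A k i x.
Proof.
move=> H Hx y Hy.
have -> : y = (x + (`|y - x|%N)%:Z)%R by lia.
elim: `|y - x|%N => [|t IHt]; first by rewrite addr0.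
apply: leq_trans IHt.
have -> : (x + t.+1%:Z = (x + t%:Z) + 1)%R by lia.
apply: H; lia.
Qed.

Lemma A_mono k i (m : int) :
  ((i * k.+2)%:Z <= 2 * m)%R -> A k.+1 i (m + 1)%R <= A k.+1 i m.
Proof.
elim: i m => [|i IH] m Hm /=.
  by case: eqP => E; case: eqP => E2 //; lia.
rewrite big_ord_recl big_ord_recr /= addnC.

rewrite (eq_bigr (fun v : 'I_k => A k.+1 i (m - (v.+1)%:Z)%R)); last first.
  by move=> v _; congr (A _ _ _); rewrite /bump /=; lia.
rewrite leq_add2l.

have -> : (m + 1 - 1%:Z = m)%R by lia.

case: (boolP ((i * k.+2)%:Z <= 2 * (m - k.+1%:Z))%R) => Hc.
  apply: (A_iter _ _ _ IH Hc); move: Hm; rewrite mulSn; set c := (i * k.+2)%N; lia.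
rewrite (A_sym _ _ (m - k.+1%:Z)%R).
move: Hm Hc; rewrite mulSn; set c := (i * k.+2)%N => Hm Hc.
apply: (A_iter _ _ _ IH); lia.
Qed.

Lemma bin2x d : 2 * 'C(d + 2, 2) = (d + 2) * (d + 1).
Proof.
elim: d => [|d IH]; first by [].
rewrite addSn binS bin1 mulnDr IH; nia.
Qed.

Theorem lemma6p2 (d i : nat) :
  1 <= d -> i <= d ->
  a 'C(d + 2, 2) (d + 1) i <= a ('C(d + 2, 2) - 1) (d + 1) i.
Proof.
move=> Hd Hi.
rewrite !aP !A_link addn1.
have Hn := bin2x d.
have Hm : i * d.+2 <= d * d.+2 by rewrite leq_mul2r Hi orbT.
move: Hn Hm; set n := 'C(d + 2, 2) => Hn Hm.
have -> : (Posz n = Posz (n - 1) + 1)%R by nia.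
apply: A_mono; nia.
Qed.
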